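(* Let $m\geq4$ be an integer, let $G$ be an $m$-free digraph, let $v\in V(G)$ and let $k$ be an integer with $1\leq k\leq m-3$. Put $V_1=\bigcup_{i=1}^{k+1}N_i^-(v)$ and $V_2=V(G)\setminus V_1$. Then the set of edges of $G$ from $V_2$ to $V_1$ equals $E(N^-_{k+2}(v),N^-_{k+1}(v))$, so it has exactly $r'_k(v)$ elements, and the number of pairs $(a,b)\in V_1\times V_2$ such that neither $(a,b)$ nor $(b,a)$ is an edge is at least $t_k(v)$.
   Context: All digraphs are finite, without loops and without parallel edges. A digraph is $m$-free if it has no directed cycle of length at most $m$. For a vertex $v$ and $i\geq 0$, $N_i^+(v)$ is the set of vertices $u$ such that the shortest directed path from $v$ to $u$ has length exactly $i$, and $N_i^-(v)$ is the set of vertices $u$ such that the shortest directed path from $u$ to $v$ has length exactly $i$. For $A,B\subseteq V(G)$, $E(A,B)$ is the set of edges $(a,b)$ with $a\in A$, $b\in B$. A directed path $(v_0,\dots,v_k)$ consists of distinct vertices with $(v_i,v_{i+1})$ an edge for each $i$; its length is $k$. It is induced if every edge of $G$ with both ends in $\{v_0,\dots,v_k\}$ is one of the edges $(v_i,v_{i+1})$; it is a shortest induced directed path if it is induced and $v_k\in N_k^+(v_0)$. Let $\mathscr{P}(G)$ be the set of shortest induced directed paths of $G$. For an integer $k\geq1$ and $v\in V(G)$: $Q_k(v)$ (resp. $R_k(v)$) is the set of triples $(x,y,z)$ of vertices for which there exist vertices $w_1,\dots,w_k$ with $(x,w_1,\dots,w_k,y,z)\in\mathscr{P}(G)$ and $y=v$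 (resp. $z=v$). $R'_k(v)$ is the set of triples $(x,y,z)$ for which there exist $w_1,\dots,w_k$ with $(x,y,w_1,\dots,w_k,z)\in\mathscr{P}(G)$ and $z=v$. $q_k(v)=|Q_k(v)|$, $r_k(v)=|R_k(v)|$, $r'_k(v)=|R'_k(v)|$. For $1\leq k\leq m-3$: $t_k(v)=\sum_{i=k}^{m-3}r_i(v)+\sum_{i=1}^{k}q_i(v)$. *)

(* Defs.v *)
(* A digraph on a finite vertex type T is an edge relation
   e : rel T (no parallel edges by construction; loops are excluded by
   m-freeness, which forbids cycles of length 1). *)
From mathcomp Require Import all_boot.
Set Implicit Arguments. Unset Strict Implicit. Unset Printing Implicit Defensive.

Section Digraph.
Variables (T : finType) (e : rel T).

Definition reach (n : nat) (x y : T) : bool :=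
  [exists p : n.-tuple T, path e x p && (last x p == y)].

Definition isdist (n : nat) (x y : T) : bool :=
  reach n x y && [forall j : 'I_n, ~~ reach j x y].

Definition Nout (i : nat) (v : T) : {set T} := [set u | isdist i v u].
Definition Nin (i : nat) (v : T) : {set T} := [set u | isdist i u v].

(* m-free: no directed cycle of length at most m.  A directed cycle of
   length L >= 1 is a duplicate-free sequence c of L vertices with
   c_0 -> c_1 -> ... -> c_{L-1} -> c_0. *)
Definition m_free (m : nat) : Prop :=
  forall c : seq T, 0 < size c <= m -> uniq c -> ~~ cycle e c.

Definition SIP (x : T) (p : seq T) : bool :=
  let s := x :: p in
  [&& path e x p, uniq s,
      [forall i : 'I_(size s), forall j : 'I_(size s),
          e (nth x s i) (nth x s j) ==> (val j == (val i).+1)]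
    & isdist (size p) x (last x p)].

Definition Qset (k : nat) (v : T) : {set T * T * T} :=
  [set t | [exists w : k.-tuple T,
     SIP t.1.1 (w ++ [:: t.1.2; t.2]) && (t.1.2 == v)]].
Definition Rset (k : nat) (v : T) : {set T * T * T} :=
  [set t | [exists w : k.-tuple T,
     SIP t.1.1 (w ++ [:: t.1.2; t.2]) && (t.2 == v)]].
Definition R'set (k : nat) (v : T) : {set T * T * T} :=
  [set t | [exists w : k.-tuple T,
     SIP t.1.1 (t.1.2 :: rcons w t.2) && (t.2 == v)]].

Definition qk (k : nat) (v : T) : nat := #|Qset k v|.
Definition rk (k : nat) (v : T) : nat := #|Rset k v|.
Definition r'k (k : nat) (v : T) : nat := #|R'set k v|.

Definition tk (m k : nat) (v : T) : nat :=
  \sum_(k <= i < (m - 3).+1) rk i v + \sum_(1 <= i < k.+1) qk i v.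

Definition Eset (A B : {set T}) : {set T * T} :=
  [set ab | [&& ab.1 \in A, ab.2 \in B & e ab.1 ab.2]].

End Digraph.

(* Main.v *)
Require Import Defs.
From mathcomp Require Import all_boot.
Set Implicit Arguments. Unset Strict Implicit. Unset Printing Implicit Defensive.

Lemma reach0 (T : finType) (e : rel T) x y : reach e 0 x y = (x == y).
Proof.
apply/existsP/eqP => [[p]|->].
- by rewrite tuple0 /= => /eqP.
- by exists [tuple]; rewrite /=.
Qed.

Lemma reachS (T : finType) (e : rel T) n x y :
  reach e n.+1 x y = [exists z, e x z && reach e n z y].
Proof.
apply/existsP/existsP => [[p]|[z /andP[exz /existsP[q Hq]]]].
- case: p / tupleP => z q /= /andP[/andP[exz pq] lq].
  exists z; rewrite exz; apply/existsP; exists q; by rewrite pq.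
- exists (cons_tuple z q); rewrite /= exz /=; exact Hq.
Qed.

Lemma reach_walk (T : finType) (e : rel T) n x y : reach e n x y ->
  exists p : seq T, [/\ size p = n, path e x p & last x p = y].
Proof.
move=> /existsP[p /andP[pp /eqP lp]]; exists (val p); split => //.
exact: size_tuple.
Qed.

Lemma walk_reach (T : finType) (e : rel T) x p :
  path e x p -> reach e (size p) x (last x p).
Proof. by move=> pp; apply/existsP; exists (in_tuple p); apply/andP; split. Qed.

Lemma reach_cat (T : finType) (e : rel T) a b x w y :
  reach e a x w -> reach e b w y -> reach e (a + b) x y.
Proof.
elim: a x => [|a IH] x.
- by rewrite reach0 => /eqP->.
- rewrite reachS => /existsP[z /andP[exz rz]] rw.
  rewrite addSn reachS; apply/existsP; exists z; rewrite exz /=; exact: IH.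
Qed.

Lemma reach1 (T : finType) (e : rel T) x y : e x y -> reach e 1 x y.
Proof. by move=> exy; rewrite reachS; apply/existsP; exists y; rewrite exy reach0 eqxx. Qed.

Lemma path_reach (T : finType) (e : rel T) x0 x p i j :
  path e x p -> i <= j -> j <= size p ->
  reach e (j - i) (nth x0 (x::p) i) (nth x0 (x::p) j).
Proof.
elim: p x i j => [|y p IH] x i j /=.
- move=> _ Hij; rewrite leqn0 => /eqP Hj; subst j.
  by move: Hij; rewrite leqn0 => /eqP->; rewrite reach0.
- move=> /andP[exy pyp] Hij Hj. case: i Hij => [|i] Hij.
  + case: j Hj Hij => [|j] Hj _; first by rewrite reach0.
    rewrite subn0 /= reachS; apply/existsP; exists y; rewrite exy /=.
    by have := IH y 0 j pyp (leq0n _) Hj; rewrite subn0.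
  + case: j Hj Hij => [|j] Hj Hij //. rewrite subSS /=. exact: IH.
Qed.

Lemma reach_isdist (T : finType) (e : rel T) n x y : reach e n x y ->
  exists2 j, j <= n & isdist e j x y.
Proof.
move=> H.
have ex : exists j, reach e j x y by exists n.
case: (ex_minnP ex) => j rj minj.
exists j; first exact: minj.
rewrite /isdist rj /=; apply/forallP => i; apply/negP => ri.
by have := minj _ ri; rewrite leqNgt ltn_ord.
Qed.

Lemma isdist_min (T : finType) (e : rel T) n j x y : isdist e n x y -> j < n -> ~~ reach e j x y.
Proof. by move=> /andP[_ /forallP H] jn; exact: (H (Ordinal jn)). Qed.

Lemma isdist_reach (T : finType) (e : rel T) n x y : isdist e n x y -> reach e n x y.
Proof. by case/andP. Qed.

Lemma isdist_uniq (T : finType) (e : rel T) a b x y :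
  isdist e a x y -> isdist e b x y -> a = b.
Proof.
move=> Ha Hb; case: (ltngtP a b) => // H.
- by have := isdist_min Hb H; rewrite isdist_reach.
- by have := isdist_min Ha H; rewrite isdist_reach.
Qed.

Lemma no_cycle (T : finType) (e : rel T) m : m_free e m ->
  forall n u, 0 < n <= m -> ~~ reach e n u u.
Proof.
move=> Hm n; elim/ltn_ind: n => n IH u /andP[n0 nm].
apply/negP => /reach_walk [p [sp pp lp]].
case/lastP: p sp pp lp => [|q y] sp pp lp; first by subst n.
rewrite last_rcons in lp; subst y.
have Hu : ~~ uniq (u :: q).
  apply/negP => Hu.
  have Hs : 0 < size (u :: q) <= m by rewrite /= -(size_rcons q u) sp.
  by move: (Hm _ Hs Hu); rewrite /= pp.
case/(uniqPn u): Hu => i [j [ij js E]].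
have jn : j < n by rewrite -sp size_rcons.
have jq : j <= size (rcons q u) by rewrite size_rcons ltnW.
have := path_reach u pp (ltnW ij) jq.
rewrite -rcons_cons !nth_rcons (ltn_trans ij js) js E => H.
have l1 : j - i < n by apply: leq_ltn_trans (leq_subr _ _) jn.
have l2 : 0 < j - i <= m.
  rewrite subn_gt0 ij /=; apply: leq_trans nm; exact: ltnW.
by have := IH (j - i) l1 (nth u (u :: q) j) l2; rewrite H.
Qed.

From mathcomp Require Import zify.

Lemma no_back (T : finType) (e : rel T) m v z j : m_free e m -> e v z -> reach e j z v -> j < m -> False.
Proof.
move=> Hm evz rj jm.
have := @no_cycle _ _ m Hm j.+1 v; rewrite ltn0Sn jm /= reachS => /(_ isT) /negP; apply; apply/existsP.
by exists z; rewrite evz.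
Qed.

Lemma last_nth (T : Type) (x : T) p : nth x (x::p) (size p) = last x p.
Proof. exact: (nth_last x (x :: p)). Qed.

Lemma short_SIP (T : finType) (e : rel T) m x p : m_free e m -> size p < m -> path e x p ->
  isdist e (size p) x (last x p) -> SIP e x p.
Proof.
move=> Hm pm pp Hd.
have ny : nth x (x::p) (size p) = last x p by exact: last_nth.
have r0 : forall i, i <= size p -> reach e i x (nth x (x::p) i).
  move=> i Hi; have := path_reach x pp (leq0n i) Hi; by rewrite subn0.
have rn : forall j, j <= size p -> reach e (size p - j) (nth x (x::p) j) (last x p).
  move=> j Hj; rewrite -ny; exact: (@path_reach _ _ x x p j (size p) pp Hj (leqnn _)).
have Hu : uniq (x :: p).
  apply: contraT => /(uniqPn x) [i [j [ij js E]]].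
  have jn : j <= size p by [].
  have r1 := r0 i (ltnW (leq_trans ij jn)); rewrite E in r1.
  have := reach_cat r1 (rn j jn).
  have lt : i + (size p - j) < size p by lia.
  by rewrite (negbTE (isdist_min Hd lt)).
rewrite /SIP /=; apply/and4P; split => //.
apply/forallP => i; apply/forallP => j; apply/implyP => Hij.
have iN : i <= size p by have := ltn_ord i.
have jN : j <= size p by have := ltn_ord j.
case: (ltngtP (val j) (val i).+1) => // H.
- have ji : j <= i by [].
  have := reach_cat (path_reach x pp ji iN) (reach1 Hij).
  have c : 0 < i - j + 1 <= m by lia.
  by rewrite (negbTE (@no_cycle _ _ m Hm _ (nth x (x::p) j) c)).
- have := reach_cat (reach_cat (r0 i iN) (reach1 Hij)) (rn j jN).
  have H2 : i.+1 < j by [].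
  have lt : i + 1 + (size p - j) < size p by lia.
  by rewrite (negbTE (isdist_min Hd lt)).
Qed.

Lemma SIP_chord (T : finType) (e : rel T) x p i j : SIP e x p -> i < size (x::p) -> j < size (x::p) ->
  e (nth x (x::p) i) (nth x (x::p) j) -> j = i.+1.
Proof.
case/and4P => _ _ /forallP H _ iS jS E.
by have := forallP (H (Ordinal iS)) (Ordinal jS); rewrite /= E => /eqP.
Qed.

Lemma mem_bigcup_seq (T : finType) (r : seq nat) (F : nat -> {set T}) x :
  (x \in \bigcup_(i <- r) F i) = has (fun i => x \in F i) r.
Proof. by elim: r => [|a r IH]; rewrite ?big_nil ?big_cons ?in_set0 // in_setU IH. Qed.

Lemma nth_mid (T : Type) x (w : seq T) i y z : size w = i ->
  nth x (x :: w ++ [:: y; z]) i.+1 = y /\ nth x (x :: w ++ [:: y; z]) i.+2 = z.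
Proof. by move=> <-; rewrite /= !nth_cat ltnn subnn ltnNge leqnSn /= subSnn. Qed.

Lemma Rset_facts (T : finType) (e : rel T) i v x y z : (x, y, z) \in Rset e i v ->
  [/\ z = v, isdist e i.+2 x v, isdist e 1 y v, 0 < i -> ~~ e x y & ~~ e y x].
Proof.
rewrite /Rset inE /= => /existsP[w /andP[Hs /eqP zv]]; subst z.
have [n1 n2] := nth_mid x y v (size_tuple w).
have Hs' := Hs.
move: Hs; rewrite /SIP /= => /and4P[pp /andP[_ uq] _ Hd].
rewrite size_cat size_tuple last_cat /= addn2 in Hd.
have Hyv : y != v.
  by move: uq; rewrite cat_uniq => /and3P[_ _]; rewrite /= inE andbT.
have eyv : e y v.
  by move: pp; rewrite cat_path => /andP[_] /= /and3P[_ ->].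
have Hsz : size (x :: w ++ [:: y; v]) = i.+3 by rewrite /= size_cat size_tuple addn2.
split => //.
- rewrite /isdist reach1 //=; apply/forallP => j; rewrite (ord1 j) reach0; exact: Hyv.
- move=> i0; apply/negP => E.
  have jl : i.+1 < size (x :: w ++ [:: y; v]) by rewrite Hsz.
  have := SIP_chord Hs' (ltn0Sn _) jl.
  rewrite n1 => /(_ E) [] H; by rewrite H in i0.
- apply/negP => E.
  have jl : i.+1 < size (x :: w ++ [:: y; v]) by rewrite Hsz.
  have := SIP_chord Hs' jl (ltn0Sn _).
  by rewrite n1 => /(_ E).
Qed.

Lemma Qset_facts (T : finType) (e : rel T) i v x y z : (x, y, z) \in Qset e i v ->
  [/\ y = v, isdist e i.+1 x v, e v z, ~~ e x z & ~~ e z x].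
Proof.
rewrite /Qset inE /= => /existsP[w /andP[Hs /eqP yv]]; subst y.
have [n1 n2] := nth_mid x v z (size_tuple w).
have Hs' := Hs.
move: Hs; rewrite /SIP /= => /and4P[pp _ _ Hd].
rewrite size_cat size_tuple last_cat /= addn2 in Hd.
have evz : e v z.
  by move: pp; rewrite cat_path => /andP[_] /= /and3P[_ ->].
have Hsz : size (x :: w ++ [:: v; z]) = i.+3 by rewrite /= size_cat size_tuple addn2.
have jl : i.+2 < size (x :: w ++ [:: v; z]) by rewrite Hsz.
split => //.
- rewrite /isdist.
  have il : i.+1 <= size (w ++ [:: v; z]) by rewrite size_cat size_tuple addn2.
  have := path_reach x pp (leq0n i.+1) il; rewrite subn0 n1 => -> /=.
  apply/forallP => j; apply/negP => rj.
  have lt : j.+1 < i.+2 by have := ltn_ord j.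
  by have := isdist_min Hd lt; rewrite -addn1 (reach_cat rj (reach1 evz)).
- apply/negP => E.
  have := SIP_chord Hs' (ltn0Sn _) jl.
  by rewrite n2 => /(_ E).
- apply/negP => E.
  have := SIP_chord Hs' jl (ltn0Sn _).
  by rewrite n2 => /(_ E).
Qed.

Lemma card_bigcup_disj (U : finType) (r : seq nat) (F : nat -> {set U}) :
  uniq r -> (forall i j x, i \in r -> j \in r -> x \in F i -> x \in F j -> i = j) ->
  \sum_(i <- r) #|F i| = #|\bigcup_(i <- r) F i|.
Proof.
elim: r => [|a r IH] /=; first by rewrite !big_nil cards0.
move=> /andP[ar ur] D.
have D' : forall i j x, i \in r -> j \in r -> x \in F i -> x \in F j -> i = j.
  by move=> i j x ir jr; apply: D; rewrite inE ?ir ?jr orbT.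
rewrite !big_cons cardsU IH //.
have -> : F a :&: \bigcup_(i <- r) F i = set0.
  apply/setP => x; rewrite !inE mem_bigcup_seq; apply/negP => /andP[xa /hasP[j jr xj]].
  have := D a j x; rewrite mem_head inE jr orbT => /(_ isT isT xa xj) aj.
  by subst; rewrite jr in ar.
by rewrite cards0 subn0.
Qed.

Lemma sum2_le (U : finType) r1 r2 (A B : nat -> {set U}) (P : {set U}) :
  uniq r1 -> uniq r2 ->
  (forall i j x, i \in r1 -> j \in r1 -> x \in A i -> x \in A j -> i = j) ->
  (forall i j x, i \in r2 -> j \in r2 -> x \in B i -> x \in B j -> i = j) ->
  (forall i x, i \in r1 -> x \in A i -> x \in P) ->
  (forall i x, i \in r2 -> x \in B i -> x \in P) ->
  (forall i j x, i \in r1 -> j \in r2 -> x \in A i -> x \in B j -> False) ->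
  \sum_(i <- r1) #|A i| + \sum_(i <- r2) #|B i| <= #|P|.
Proof.
move=> u1 u2 dA dB sA sB dAB.
rewrite (card_bigcup_disj u1 dA) (card_bigcup_disj u2 dB).
have -> : #|\bigcup_(i <- r1) A i| + #|\bigcup_(i <- r2) B i| =
          #|\bigcup_(i <- r1) A i :|: \bigcup_(i <- r2) B i|.
  rewrite cardsU.
  have -> : \bigcup_(i <- r1) A i :&: \bigcup_(i <- r2) B i = set0.
    apply/setP => x; rewrite !inE !mem_bigcup_seq; apply/negP.
    by move=> /andP[/hasP[i ir xi] /hasP[j jr xj]]; apply: (dAB i j x).
  by rewrite cards0 subn0.
apply: subset_leq_card; apply/subsetP => x; rewrite inE !mem_bigcup_seq.
by case/orP => /hasP[i ir xi]; [apply: (sA i) | apply: (sB i)].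
Qed.

Theorem mainTheorem8 (T : finType) (e : rel T) (m : nat) (v : T) (k : nat) :
  4 <= m -> m_free e m -> 1 <= k <= m - 3 ->
  let V1 : {set T} := \bigcup_(1 <= i < k.+2) Nin e i v in
  let V2 : {set T} := ~: V1 in
  Eset e V2 V1 = Eset e (Nin e k.+2 v) (Nin e k.+1 v) /\
  #|Eset e V2 V1| = r'k e k v /\
  tk e m k v <= #|[set ab : T * T | [&& ab.1 \in V1, ab.2 \in V2,
                                        ~~ e ab.1 ab.2 & ~~ e ab.2 ab.1]]|.
Proof.
move=> m4 Hm /andP[k1 km] V1 V2.
have V1P : forall x, reflect (exists2 i, 1 <= i < k.+2 & isdist e i x v) (x \in V1).
  move=> x; rewrite /V1 mem_bigcup_seq; apply: (iffP hasP) => [[i]|[i]];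
    rewrite ?mem_index_iota ?inE => Hi Hd; exists i => //; by rewrite ?mem_index_iota ?inE.
have notV1 : forall x j, isdist e j x v -> k.+1 < j -> x \notin V1.
  move=> x j Hd jk; apply/V1P => [[i Hi Hd']]; have := isdist_uniq Hd Hd'; lia.
have E1 : Eset e V2 V1 = Eset e (Nin e k.+2 v) (Nin e k.+1 v).
  apply/setP => [[a b]]; rewrite /Eset !inE /=.
  apply/and3P/and3P => [[aV bV eab]|[da db eab]].
  - case/V1P: bV => i /andP[i1 ik] db.
    have [j jle dj] := reach_isdist (reach_cat (reach1 eab) (isdist_reach db)).
    have jk : k.+1 < j.
      rewrite ltnNge; apply/negP => jk.
      case: j jle dj jk => [|j] jle dj jk.
      + move: (isdist_reach dj); rewrite reach0 => /eqP av; subst a.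
        by case: (no_back Hm eab (isdist_reach db) (_ : i < m)); lia.
      + by move/negP: aV; apply; apply/V1P; exists j.+1 => //; lia.
    have ej : j = k.+2 by lia.
    have ei : i = k.+1 by lia.
    by subst.
  - split => //; first exact: notV1 da _.
    by apply/V1P; exists k.+1 => //; lia.
split => //.
split.
  rewrite E1 /r'k.
  have -> : Eset e (Nin e k.+2 v) (Nin e k.+1 v) = [set (t.1.1, t.1.2) | t in R'set e k v].
    apply/setP => [[a b]]; rewrite /Eset !inE /=; apply/and3P/imsetP.
    - move=> [da db eab].
      have [q [sq pq lq]] := reach_walk (isdist_reach db).
      case/lastP: q sq pq lq => [|w z] sq pq lq; first by [].
      rewrite last_rcons in lq; subst z.
      have sw : size w == k by move: sq; rewrite size_rcons => [[->]].
      exists (a, b, v) => //.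
      rewrite /R'set inE /=; apply/existsP; exists (Tuple sw); rewrite eqxx andbT /=.
      apply: (@short_SIP _ _ m) => //=.
      + rewrite size_rcons (eqP sw); lia.
      + by rewrite eab pq.
      + by rewrite last_rcons size_rcons (eqP sw).
    - move=> [[[x y] z]]; rewrite /R'set inE /= => /existsP[w /andP[Hs /eqP zv]] [-> ->]; subst z.
      move: Hs; rewrite /SIP /= => /and4P[/andP[exy py] _ _ Hd].
      rewrite size_rcons size_tuple last_rcons in Hd.
      split => //.
      rewrite /isdist; have := walk_reach py; rewrite size_rcons size_tuple last_rcons => ->.
      apply/forallP => j; apply/negP => rj.
      have lt : j.+1 < k.+2 by have := ltn_ord j.
      have := isdist_min Hd lt; rewrite reachS => /existsP; apply.
      by exists y; rewrite exy.
  rewrite card_in_imset //.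
  move=> [[x1 y1] z1] [[x2 y2] z2].
  rewrite /R'set !inE /= => /existsP[_ /andP[_ /eqP->]] /existsP[_ /andP[_ /eqP->]] [-> ->] //.
pose A i := [set (t.1.2, t.1.1) | t in Rset e i v].
pose B i := [set (t.1.1, t.2) | t in Qset e i v].
have -> : tk e m k v = \sum_(i <- index_iota k (m-3).+1) #|A i| + \sum_(i <- index_iota 1 k.+1) #|B i|.
  rewrite /tk; congr (_ + _); apply: eq_bigr => i _.
  - rewrite /rk /A card_in_imset //.
    move=> [[x1 y1] z1] [[x2 y2] z2] /Rset_facts[-> _ _ _ _] /Rset_facts[-> _ _ _ _] /= [-> ->] //.
  - rewrite /qk /B card_in_imset //.
    move=> [[x1 y1] z1] [[x2 y2] z2] /Qset_facts[-> _ _ _ _] /Qset_facts[-> _ _ _ _] /= [-> ->] //.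
apply: sum2_le; try exact: iota_uniq.
- move=> i j x _ _ /imsetP[[[x1 y1] z1] H1 ->] /imsetP[[[x2 y2] z2] H2 /= [G1 G2]].
  case/Rset_facts: H1 => _ d1 _ _ _; case/Rset_facts: H2 => _ d2 _ _ _.
  subst; have := isdist_uniq d1 d2; by case.
- move=> i j x _ _ /imsetP[[[x1 y1] z1] H1 ->] /imsetP[[[x2 y2] z2] H2 /= [G1 G2]].
  case/Qset_facts: H1 => _ d1 _ _ _; case/Qset_facts: H2 => _ d2 _ _ _.
  subst; have := isdist_uniq d1 d2; by case.
- move=> i x; rewrite mem_index_iota => /andP[ki im] /imsetP[[[x1 y1] z1] H ->].
  case/Rset_facts: H => zv dx dy nxy nyx.
  rewrite inE /=; apply/and4P; split => //.
  + by apply/V1P; exists 1.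
  + by rewrite /V2 inE; apply: notV1 dx _; lia.
  + by apply: nxy; lia.
- move=> i x; rewrite mem_index_iota => /andP[ki im] /imsetP[[[x1 y1] z1] H ->].
  case/Qset_facts: H => yv dx evz nxz nzx.
  rewrite inE /=; apply/and4P; split => //.
  + by apply/V1P; exists i.+1 => //; lia.
  + rewrite /V2 inE; apply/V1P => [[j Hj dj]].
    by apply: (no_back Hm evz (isdist_reach dj)); lia.
- move=> i j x; rewrite !mem_index_iota => /andP[ki im] _ /imsetP[[[x1 y1] z1] H1 ->] /imsetP[[[x2 y2] z2] H2 /= [G1 G2]].
  case/Rset_facts: H1 => _ dx _ _ _; case/Qset_facts: H2 => _ _ evz _ _.
  subst; apply: (no_back Hm evz (isdist_reach dx)); lia.
Qed.
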